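(* Consider the planar system \[ \frac{du}{dt}=c\left(\frac{\beta u^{2}}{v}-u\right),\qquad \frac{dv}{dt}=b+u^{2}-dv, \] with positive constants $c,\beta,b,d$, regarded as a family in the parameter $b$. Let $b_{SN}=\frac{d^{2}\beta^{2}}{4}$. Then as $b$ passes through $b_{SN}$ the system undergoes a saddle-node bifurcation at the equilibrium $E_{1}=\left(\tfrac{d\beta}{2},\tfrac{d\beta^{2}}{2}\right)$ (which is the unique positive equilibrium when $b=b_{SN}$).
   Context: Saddle-node bifurcation: as the parameter crosses the critical value, two equilibria (here, for $b<b_{SN}$, the positive equilibria $\left(\frac{d\beta\pm\sqrt{d^2\beta^2-4b}}{2},\beta\cdot\frac{d\beta\pm\sqrt{d^2\beta^2-4b}}{2}\right)$) coalesce into a single non-hyperbolic equilibrium and disappear (no positive equilibria for $b>b_{SN}$), with the nondegeneracy/transversality conditions of Sotomayor's theorem satisfied.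
   Formalization: Besides being positive, the constants c and d are assumed to satisfy c ≠ d. The statement above fails without it. *)

(* Defs.v *)
From Stdlib Require Import Reals.
From Coquelicot Require Import Coquelicot.
Open Scope R_scope.

Definition pt := (R * R)%type.

Definition field (c beta d b : R) (p : pt) : pt :=
  (c * (beta * (fst p) ^ 2 / snd p - fst p), b + (fst p) ^ 2 - d * snd p).

Definition family := R -> pt -> pt.

Definition comp (i : bool) (p : pt) : R := if i then fst p else snd p.
Definition unit_vec (j : bool) : pt := if j then (1, 0) else (0, 1).
Definition add_sc (x : pt) (t : R) (h : pt) : pt :=
  (fst x + t * fst h, snd x + t * snd h).

(* Partial derivative of the i-th component w.r.t. the j-th state variable
   (true = first component u, false = second component v). *)
Definition pderiv (f : family) (mu : R) (x : pt) (i j : bool) : R :=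
  Derive (fun t => comp i (f mu (add_sc x t (unit_vec j)))) 0.

Definition jac_apply (f : family) mu x (h : pt) : pt :=
  (pderiv f mu x true true * fst h + pderiv f mu x true false * snd h,
   pderiv f mu x false true * fst h + pderiv f mu x false false * snd h).

Definition jac_left (f : family) mu x (w : pt) : pt :=
  (fst w * pderiv f mu x true true + snd w * pderiv f mu x false true,
   fst w * pderiv f mu x true false + snd w * pderiv f mu x false false).

Definition jac_trace (f : family) mu x : R :=
  pderiv f mu x true true + pderiv f mu x false false.

Definition param_deriv (f : family) mu x : pt :=
  (Derive (fun m => fst (f m x)) mu, Derive (fun m => snd (f m x)) mu).

Definition second_deriv (f : family) mu x (h : pt) : pt :=
  (Derive_n (fun t => fst (f mu (add_sc x t h))) 2 0,
   Derive_n (fun t => snd (f mu (add_sc x t h))) 2 0).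

Definition dot (a b : pt) : R := fst a * fst b + snd a * snd b.

(* Differentiability requirements making the above derivatives meaningful:
   the partial derivatives, the parameter derivative and the second
   directional derivatives exist at (mu0, x0). *)
Definition derivs_exist (f : family) mu0 x0 (h : pt) : Prop :=
  (forall i j, ex_derive (fun t => comp i (f mu0 (add_sc x0 t (unit_vec j)))) 0) /\
  (forall i, ex_derive (fun m => comp i (f m x0)) mu0) /\
  (forall i, ex_derive_n (fun t => comp i (f mu0 (add_sc x0 t h))) 2 0).

(* Hypotheses of Sotomayor's theorem for a saddle-node bifurcation of the
   planar family x' = f(mu, x) at (mu0, x0):
   - x0 is an equilibrium at mu0;
   - D_x f(mu0,x0) has 0 as a SIMPLE eigenvalue (planar case: some nonzero
     right eigenvector v and left eigenvector w for 0, and nonzero trace, so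
     the other eigenvalue is nonzero);
   - transversality:   w . f_mu(mu0,x0) <> 0;
   - nondegeneracy:    w . D^2_x f(mu0,x0)(v,v) <> 0. *)
Definition sotomayor_saddle_node (f : family) (mu0 : R) (x0 : pt) : Prop :=
  f mu0 x0 = (0, 0) /\
  exists v w : pt,
    v <> (0, 0) /\ w <> (0, 0) /\
    derivs_exist f mu0 x0 v /\
    jac_apply f mu0 x0 v = (0, 0) /\
    jac_left f mu0 x0 w = (0, 0) /\
    jac_trace f mu0 x0 <> 0 /\
    dot w (param_deriv f mu0 x0) <> 0 /\
    dot w (second_deriv f mu0 x0 v) <> 0.

Definition pos_equilibrium (c beta d b : R) (p : pt) : Prop :=
  0 < fst p /\ 0 < snd p /\ field c beta d b p = (0, 0).

(* Main.v *)
Require Import Defs.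
From Stdlib Require Import Reals Lra Psatz FunctionalExtensionality.
From Coquelicot Require Import Coquelicot.
Open Scope R_scope.

Lemma equil_iff c beta d b u v : 0 < c -> 0 < beta -> 0 < u -> 0 < v ->
  (field c beta d b (u, v) = (0, 0) <-> v = beta * u /\ b + u ^ 2 - d * (beta * u) = 0).
Proof.
  intros hc hb hu hv; split.
  - intro H; unfold field in H; simpl in H; injection H as H1 H2.
    assert (E : beta * (u * (u * 1)) / v - u = 0) by (destruct (Rmult_integral _ _ H1); lra).
    assert (E2 : beta * u * u = u * v).
    { replace (beta * u * u) with ((beta * (u * (u * 1)) / v) * v) by (field; lra). nra. }
    assert (E3 : u * (beta * u - v) = 0) by nra.
    destruct (Rmult_integral _ _ E3); [lra|].
    assert (Hv : v = beta * u) by lra. split; [lra|]. rewrite Hv in H2. simpl in H2. lra.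
  - intros [Hv H]. rewrite Hv. unfold field; simpl. f_equal.
    + field_simplify; [|lra]. unfold Rdiv. ring_simplify. reflexivity.
    + simpl in H. lra.
Qed.
Definition quad (a0 a1 k : R) := fun t : R => a0 + a1 * t + k * t ^ 2.

Lemma quad_D1 a0 a1 k : Derive (quad a0 a1 k) = fun t => a1 + 2 * k * t.
Proof.
  apply functional_extensionality; intro t. apply is_derive_unique.
  unfold quad. auto_derive; auto. ring.
Qed.

Lemma quad_exn2 a0 a1 k : ex_derive_n (quad a0 a1 k) 2 0.
Proof.
  simpl. rewrite quad_D1. auto_derive. auto.
Qed.

Lemma quad_Dn2 a0 a1 k : Derive_n (quad a0 a1 k) 2 0 = 2 * k.
Proof.
  simpl. rewrite quad_D1. apply is_derive_unique. auto_derive; auto. ring.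
Qed.

Lemma soto c beta d : 0 < c -> 0 < beta -> 0 < d -> c <> d ->
  sotomayor_saddle_node (fun b p => field c beta d b p) (d ^ 2 * beta ^ 2 / 4)
     (d * beta / 2, d * beta ^ 2 / 2).
Proof.
  intros hc hb hd hcd.
  assert (hdb : 0 < d * beta) by nra.
  assert (hdbb : 0 < d * beta * beta) by nra.
  set (F := fun b p => field c beta d b p).
  set (b0 := d ^ 2 * beta ^ 2 / 4).
  set (x0 := (d * beta / 2, d * beta ^ 2 / 2)).
  assert (P11 : pderiv F b0 x0 true true = c).
  { unfold pderiv, F, field, x0; simpl. apply is_derive_unique. auto_derive.
    nra. field. lra. }
  assert (P12 : pderiv F b0 x0 true false = - c / beta).
  { unfold pderiv, F, field, x0; simpl. apply is_derive_unique. auto_derive.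
    nra. field. lra. }
  assert (P21 : pderiv F b0 x0 false true = d * beta).
  { unfold pderiv, F, field, x0; simpl. apply is_derive_unique. auto_derive.
    auto. field. }
  assert (P22 : pderiv F b0 x0 false false = - d).
  { unfold pderiv, F, field, x0; simpl. apply is_derive_unique. auto_derive.
    auto. field. }
  assert (Q1 : (fun t => fst (F b0 (add_sc x0 t (1, beta)))) = quad 0 0 0).
  { apply functional_extensionality; intro t. unfold F, field, x0, quad, add_sc; simpl.
    replace (d * (beta * (beta * 1)) / 2 + t * beta) with (beta * (d * beta / 2 + t * 1)) by field.
    set (X := d * beta / 2 + t * 1).
    destruct (Req_dec X 0) as [HX|HX].
    - rewrite HX. unfold Rdiv. rewrite Rmult_0_r, Rinv_0. ring.
    - field. split; lra. }
  assert (Q2 : (fun t => snd (F b0 (add_sc x0 t (1, beta)))) =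
               quad (b0 + (d * beta / 2) ^ 2 - d * (d * beta ^ 2 / 2)) (d * beta - d * beta) 1).
  { apply functional_extensionality; intro t. unfold F, field, x0, quad, add_sc; simpl. field. }
  split.
  { unfold F, field, x0, b0; simpl. f_equal; field. lra. }
  exists (1, beta), (d * beta, - c).
  split; [intro H; injection H; lra|].
  split; [intro H; injection H; lra|].
  split.
  { split; [|split].
    - intros [|] [|]; unfold F, field, x0, comp, add_sc, unit_vec; simpl; auto_derive; auto; nra.
    - intros [|]; unfold F, field, x0, comp; simpl; auto_derive; auto; nra.
    - intros [|].
      + change (ex_derive_n (fun t => fst (F b0 (add_sc x0 t (1, beta)))) 2 0).
        rewrite Q1. apply quad_exn2.
      + change (ex_derive_n (fun t => snd (F b0 (add_sc x0 t (1, beta)))) 2 0).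
        rewrite Q2. apply quad_exn2. }
  split. { unfold jac_apply. rewrite P11, P12, P21, P22. simpl. f_equal; field; lra. }
  split. { unfold jac_left. rewrite P11, P12, P21, P22. simpl. f_equal; field; lra. }
  split. { unfold jac_trace. rewrite P11, P22. lra. }
  split.
  { unfold dot, param_deriv, F, field, x0; simpl.
    rewrite Derive_const.
    rewrite (is_derive_unique _ b0 1).
    2:{ auto_derive; auto; ring. }
    nra. }
  unfold dot, second_deriv. fold F b0 x0. rewrite Q1, Q2, !quad_Dn2. simpl. nra.
Qed.
Theorem theorem4 (c beta d : R) (hc : 0 < c) (hbeta : 0 < beta) (hd : 0 < d)
  (hcd : c <> d) :
  let bSN := d ^ 2 * beta ^ 2 / 4 in
  let E1 : pt := (d * beta / 2, d * beta ^ 2 / 2) in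
  (* b < b_SN : exactly two distinct positive equilibria *)
  (forall b, 0 < b -> b < bSN ->
     let Ep : pt := ((d * beta + sqrt (d ^ 2 * beta ^ 2 - 4 * b)) / 2,
                     beta * ((d * beta + sqrt (d ^ 2 * beta ^ 2 - 4 * b)) / 2)) in
     let Em : pt := ((d * beta - sqrt (d ^ 2 * beta ^ 2 - 4 * b)) / 2,
                     beta * ((d * beta - sqrt (d ^ 2 * beta ^ 2 - 4 * b)) / 2)) in
     Ep <> Em /\ forall p, pos_equilibrium c beta d b p <-> (p = Ep \/ p = Em)) /\
  (* b = b_SN : E1 is the unique positive equilibrium *)
  (forall p, pos_equilibrium c beta d bSN p <-> p = E1) /\
  (* b > b_SN : no positive equilibrium *)
  (forall b, bSN < b -> forall p, ~ pos_equilibrium c beta d b p) /\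
  (* Sotomayor's saddle-node conditions at (b_SN, E1) *)
  sotomayor_saddle_node (fun b p => field c beta d b p) bSN E1.
Proof.
  intros bSN E1.
  assert (hdb : 0 < d * beta) by nra.
  split; [|split; [|split]].
  - intros b hb0 hb; cbv zeta.
    set (D := d ^ 2 * beta ^ 2 - 4 * b).
    assert (hD : 0 < D) by (unfold D, bSN in *; lra).
    set (s := sqrt D).
    assert (hs : 0 < s) by (apply sqrt_lt_R0; exact hD).
    assert (hs2 : s * s = D) by (apply sqrt_sqrt; lra).
    assert (hsl : s < d * beta).
    { destruct (Rlt_or_le s (d * beta)) as [h|h]; [exact h|].
      unfold D in hs2. nra. }
    split.
    + intro H. injection H as H1 H2. lra.
    + intros [u v]. unfold pos_equilibrium; simpl. split.
      * intros [hu [hv H]]. apply equil_iff in H; auto. destruct H as [Hv H].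
        assert (F : (u - (d * beta + s) / 2) * (u - (d * beta - s) / 2) = 0).
        { replace ((u - (d * beta + s) / 2) * (u - (d * beta - s) / 2))
            with (u ^ 2 - d * beta * u + (d^2*beta^2 - s * s) / 4) by field.
          rewrite hs2. unfold D. lra. }
        destruct (Rmult_integral _ _ F) as [F1|F1]; [left|right];
          (f_equal; [lra| rewrite Hv; f_equal; lra]).
      * assert (K : forall u, u = (d * beta + s) / 2 \/ u = (d * beta - s) / 2 ->
                 0 < u /\ 0 < beta * u /\ field c beta d b (u, beta * u) = (0, 0)).
        { intros u0 Hu0. assert (0 < u0) by (destruct Hu0; lra).
          split; [lra|]. split; [nra|]. apply equil_iff; try nra. split; [reflexivity|].
          assert (F : (u0 - (d * beta + s) / 2) * (u0 - (d * beta - s) / 2) = 0)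
            by (destruct Hu0; subst u0; ring).
          replace ((u0 - (d * beta + s) / 2) * (u0 - (d * beta - s) / 2))
            with (u0 ^ 2 - d * beta * u0 + (d^2*beta^2 - s * s) / 4) in F by field.
          rewrite hs2 in F. unfold D in F. lra. }
        intros [H|H]; injection H as -> ->; apply K; auto.
  - intros [u v]. unfold pos_equilibrium; simpl. split.
    + intros [hu [hv H]]. apply equil_iff in H; auto. destruct H as [Hv H].
      unfold bSN in H.
      assert (Hu : u = d * beta / 2) by nra.
      unfold E1; f_equal; [lra|]. rewrite Hv, Hu. field.
    + unfold E1. intro H; injection H as -> ->.
      split; [lra|]. split; [nra|]. apply equil_iff; try nra.
      split; [field|unfold bSN; field].
  - intros b hb [u v] [hu [hv H]]. simpl in *. apply equil_iff in H; auto.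
    destruct H as [_ H]. unfold bSN in hb.
    assert (0 <= (u - d * beta / 2) ^ 2) by apply pow2_ge_0. nra.
  - apply soto; auto.
Qed.
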